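(* If $\Sigma \cup \{x\} \vdash P$ and $v \not\in \Sigma$, then $\Sigma \cup \{v\} \vdash P[v/x]$.
   Context: lqCCS is a quantum process calculus whose processes are built from: discard $\mathbf{0}_{\tilde e}$ (a deadlocked process keeping ownership of the qubits $\tilde e$), $\tau.P$, superoperator application $\mathcal{E}(\tilde e).P$, measurement $M(\tilde e \triangleright x).P$ (measure the qubits $\tilde e$ and bind the classical outcome to $x$), input $c?x.P$, asynchronous output $c!e$, sum $P+Q$, parallel composition $P \parallel Q$, restriction $P \setminus c$, and if-then-else. Typing judgments have the form $\Sigma \vdash P$, where $\Sigma$ is a set of qubit names, used linearly: a qubit name enters $\Sigma$ only by being sent ($\{e\} \vdash c!e$ for a quantum channel $c$) or discarded ($\Sigma \vdash \mathbf{0}_{\tilde e}$ with $\tilde e$ an enumeration of $\Sigma$); a parallel composition $P_1 \parallel P_2$ is typed by $\Sigma_1 \cup \Sigma_2$ only if $\Sigma_1 \vdash P_1$, $\Sigma_2 \vdash P_2$ and $\Sigma_1 \cap \Sigma_2 = \emptyset$; receiving a qubit on a quantum channel, $c?x.P$, is typed by $\Sigma$ when $\Sigma \cup \{x\} \vdash P$; superoperators and measurements may only act on qubits in the current $\Sigma$. Here $x$ is a quantum variable, $v$ a qubit name, and $P[v/x]$ denotes the substitution of $v$ for $x$ in $P$. *)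

(* Defs.v *)
From Stdlib Require Import List Arith.
Import ListNotations.

Definition qvar := nat.
Definition qname := nat.
Definition cvar := nat.
Definition chan := nat.
Definition superop := nat.
Definition measurement := nat.

Inductive qexp : Type :=
| QV (x : qvar)
| QN (v : qname).

Inductive cexp : Type :=
| CVar (y : cvar)
| CConst (n : nat)
| COp (op : nat -> nat -> nat) (a b : cexp).

Inductive proc : Type :=
| Discard (l : list qexp)
| Tau (P : proc)
| SupOp (E : superop) (l : list qexp) (P : proc)
| Meas (M : measurement) (l : list qexp) (y : cvar) (P : proc)
| QIn (c : chan) (x : qvar) (P : proc)
| CIn (c : chan) (y : cvar) (P : proc)
| QOut (c : chan) (e : qexp)
| COut (c : chan) (e : cexp)
| Sum (P Q : proc)
| Par (P Q : proc)
| Res (P : proc) (c : chan)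
| Ite (b : cexp) (P Q : proc).

Definition qset := qexp -> Prop.
Definition qadd (S : qset) (e : qexp) : qset := fun e' => S e' \/ e' = e.

(* Linear typing judgment  S |- P, relative to the classification
   [qch c = true] iff c is a quantum channel. *)
Inductive typed (qch : chan -> bool) : qset -> proc -> Prop :=
| T_Discard : forall S l,
    NoDup l -> (forall e, S e <-> In e l) -> typed qch S (Discard l)
| T_Tau : forall S P, typed qch S P -> typed qch S (Tau P)
| T_SupOp : forall S E l P,
    (forall e, In e l -> S e) -> typed qch S P -> typed qch S (SupOp E l P)
| T_Meas : forall S M l y P,
    (forall e, In e l -> S e) -> typed qch S P -> typed qch S (Meas M l y P)
| T_QIn : forall S c x P,
    qch c = true -> ~ S (QV x) -> typed qch (qadd S (QV x)) P ->
    typed qch S (QIn c x P)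
| T_CIn : forall S c y P,
    qch c = false -> typed qch S P -> typed qch S (CIn c y P)
| T_QOut : forall S c e,
    qch c = true -> (forall e', S e' <-> e' = e) -> typed qch S (QOut c e)
| T_COut : forall S c e,
    qch c = false -> (forall e', ~ S e') -> typed qch S (COut c e)
| T_Sum : forall S P Q, typed qch S P -> typed qch S Q -> typed qch S (Sum P Q)
| T_Par : forall S S1 S2 P1 P2,
    typed qch S1 P1 -> typed qch S2 P2 ->
    (forall e, ~ (S1 e /\ S2 e)) ->
    (forall e, S e <-> S1 e \/ S2 e) ->
    typed qch S (Par P1 P2)
| T_Res : forall S P c, typed qch S P -> typed qch S (Res P c)
| T_Ite : forall S b P Q,
    typed qch S P -> typed qch S Q -> typed qch S (Ite b P Q).

Definition subst_qexp (v : qname) (x : qvar) (e : qexp) : qexp :=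
  match e with
  | QV y => if Nat.eqb y x then QN v else e
  | QN _ => e
  end.

Fixpoint subst (v : qname) (x : qvar) (P : proc) : proc :=
  match P with
  | Discard l => Discard (map (subst_qexp v x) l)
  | Tau P => Tau (subst v x P)
  | SupOp E l P => SupOp E (map (subst_qexp v x) l) (subst v x P)
  | Meas M l y P => Meas M (map (subst_qexp v x) l) y (subst v x P)
  | QIn c y P => if Nat.eqb y x then QIn c y P else QIn c y (subst v x P)
  | CIn c y P => CIn c y (subst v x P)
  | QOut c e => QOut c (subst_qexp v x e)
  | COut c e => COut c e
  | Sum P Q => Sum (subst v x P) (subst v x Q)
  | Par P Q => Par (subst v x P) (subst v x Q)
  | Res P c => Res (subst v x P) c
  | Ite b P Q => Ite b (subst v x P) (subst v x Q)
  end.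

(* Main.v *)
Require Import Defs.
From Stdlib Require Import List Arith.
Import ListNotations.

Lemma qexp_eq_dec (a b : qexp) : {a = b} + {a <> b}.
Proof. decide equality; apply Nat.eq_dec. Qed.

Lemma sq_ne v x e : e <> QV x -> subst_qexp v x e = e.
Proof. destruct e as [y|w]; simpl; auto. destruct (Nat.eqb_spec y x); subst; congruence. Qed.

Lemma sq_eq v x : subst_qexp v x (QV x) = QN v.
Proof. simpl. rewrite Nat.eqb_refl. reflexivity. Qed.

Lemma typed_ext qch S P : typed qch S P -> forall S', (forall e, S e <-> S' e) -> typed qch S' P.
Proof.
  induction 1; intros S' HS.
  - constructor; auto. intro e; rewrite <- HS; auto.
  - constructor; auto.
  - constructor; auto. intros e He; apply HS; auto.
  - constructor; auto. intros e He; apply HS; auto.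
  - constructor; auto. rewrite <- HS; auto. apply IHtyped. intro e; unfold qadd; rewrite HS; tauto.
  - constructor; auto.
  - constructor; auto. intro e'; rewrite <- HS; auto.
  - constructor; auto. intro e'; rewrite <- HS; auto.
  - constructor; auto.
  - eapply T_Par; eauto. intro e; rewrite <- HS; auto.
  - constructor; auto.
  - constructor; auto.
Qed.

Lemma noocc qch S P v x : typed qch S P -> ~ S (QV x) -> subst v x P = P.
Proof.
  intros H; revert v x; induction H; intros vv xx Hx; simpl; auto;
  try (rewrite IHtyped by auto); try (rewrite IHtyped1, IHtyped2 by auto); auto.
  - f_equal. rewrite <- (map_id l) at 2. apply map_ext_in. intros e He.
    apply sq_ne. intro; subst. apply Hx, H0; auto.
  - f_equal. rewrite <- (map_id l) at 2. apply map_ext_in. intros e He.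
    apply sq_ne. intro; subst. auto.
  - f_equal. rewrite <- (map_id l) at 2. apply map_ext_in. intros e He.
    apply sq_ne. intro; subst. auto.
  - destruct (Nat.eqb_spec x xx); auto. rewrite IHtyped; auto.
    unfold qadd; intros [?|?]; [auto|congruence].
  - f_equal. apply sq_ne. intro; subst. apply Hx, H0; auto.
  - rewrite IHtyped1, IHtyped2; auto. intro; apply Hx, H2; auto.
    intro; apply Hx, H2; auto.
Qed.

Lemma nodup_map_inj {A B} (f : A -> B) l : NoDup l ->
  (forall a b, In a l -> In b l -> f a = f b -> a = b) -> NoDup (map f l).
Proof.
  induction 1 as [|a l Ha Hl IH]; intros Hi; simpl; constructor.
  - intro Hin. apply in_map_iff in Hin as [b [Hb Hbl]].
    assert (b = a) by (apply Hi; simpl; auto). subst; auto.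
  - apply IH. intros; apply Hi; simpl; auto.
Qed.

Lemma main qch T P : typed qch T P -> forall S vv xx, (forall e, T e <-> S e \/ e = QV xx) ->
  ~ S (QV xx) -> ~ S (QN vv) -> typed qch (qadd S (QN vv)) (subst vv xx P).
Proof.
  induction 1; intros S0 vv xx HT Hx Hv; simpl.
  - constructor.
    + apply nodup_map_inj; auto. intros a b Ha Hb Hab.
      apply H0, HT in Ha. apply H0, HT in Hb.
      destruct Ha as [Ha| ->]; destruct Hb as [Hb| ->]; auto.
      * rewrite !sq_ne in Hab; auto; intro; subst; auto.
      * rewrite sq_eq, sq_ne in Hab; [subst; contradiction|]. intro; subst; auto.
      * rewrite sq_eq, sq_ne in Hab; [subst; contradiction|]. intro; subst; auto.
    + intro e. unfold qadd. split.
      * intros [He| ->].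
        -- apply in_map_iff. exists e. split.
           ++ apply sq_ne. intro; subst; auto.
           ++ apply H0, HT; auto.
        -- apply in_map_iff. exists (QV xx). split; [apply sq_eq|apply H0, HT; auto].
      * intro He. apply in_map_iff in He as [e0 [<- He0]].
        apply H0, HT in He0. destruct He0 as [He0| ->].
        -- left. rewrite sq_ne; auto. intro; subst; auto.
        -- right. apply sq_eq.
  - constructor; eauto.
  - constructor; eauto. intros e He. apply in_map_iff in He as [e0 [<- He0]].
    apply H, HT in He0. destruct He0 as [He0| ->].
    + left. rewrite sq_ne; auto. intro; subst; auto.
    + right. apply sq_eq.
  - constructor; eauto. intros e He. apply in_map_iff in He as [e0 [<- He0]].
    apply H, HT in He0. destruct He0 as [He0| ->].
    + left. rewrite sq_ne; auto. intro; subst; auto.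
    + right. apply sq_eq.
  - destruct (Nat.eqb_spec x xx).
    + subst. exfalso. apply H0, HT. auto.
    + constructor; auto.
      * unfold qadd; intros [?|?]; [|congruence]. apply H0, HT; auto.
      * apply typed_ext with (S := qadd (qadd (fun e => S0 e) (QV x)) (QN vv)).
        -- apply IHtyped.
           ++ intro e. unfold qadd. rewrite HT. tauto.
           ++ unfold qadd; intros [?|?]; [auto|congruence].
           ++ unfold qadd; intros [?|?]; [auto|congruence].
        -- intro e; unfold qadd; tauto.
  - constructor; eauto.
  - constructor; auto. intro e'. unfold qadd.
    assert (e = QV xx) by (symmetry; apply H0, HT; auto). subst.
    rewrite sq_eq. split.
    + intros [H1|H1]; auto. exfalso. assert (e' = QV xx) by (apply H0, HT; auto). subst; auto.
    + auto.
  - exfalso. apply (H0 (QV xx)), HT. auto.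
  - constructor; eauto.
  - assert (HxT : S (QV xx)) by (apply HT; auto).
    apply H2 in HxT. destruct HxT as [H1x|H2x].
    + assert (N2 : ~ S2 (QV xx)) by (intro; apply (H1 (QV xx)); auto).
      rewrite (noocc _ _ _ vv xx H0 N2).
      apply T_Par with (S1 := qadd (fun e => S1 e /\ e <> QV xx) (QN vv)) (S2 := S2).
      * apply IHtyped1; auto.
        -- intro e. split.
           ++ intro He. destruct (qexp_eq_dec e (QV xx)); [right|left]; auto.
           ++ intros [He| ->]; [apply He|auto].
        -- intros [_ Hne]; auto.
        -- intros [He _]. assert (S (QN vv)) by (apply H2; auto). apply HT in H3 as [?|?]; [auto|discriminate].
      * exact H0.
      * intros e [Ha Hb]. unfold qadd in Ha. destruct Ha as [[Ha Hne]| ->].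
        -- apply (H1 e); auto.
        -- apply Hv. assert (S (QN vv)) by (apply H2; auto). apply HT in H3 as [?|?]; [auto|discriminate].
      * intro e. unfold qadd. split.
        -- intros [He| ->]; [|left; right; auto].
           assert (S e) by (apply HT; auto). apply H2 in H3 as [?|?]; [|auto].
           left; left; split; auto. intro; subst; auto.
        -- intros [[[Ha Hne]| ->]|Hb]; auto.
           ++ left. assert (S e) by (apply H2; auto). apply HT in H3 as [?|?]; [auto|congruence].
           ++ left. assert (S e) by (apply H2; auto). apply HT in H3 as [?| ->]; auto.
              exfalso; auto.
    + assert (N1 : ~ S1 (QV xx)) by (intro; apply (H1 (QV xx)); auto).
      rewrite (noocc _ _ _ vv xx H N1).
      apply T_Par with (S2 := qadd (fun e => S2 e /\ e <> QV xx) (QN vv)) (S1 := S1).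
      * exact H.
      * apply IHtyped2; auto.
        -- intro e. split.
           ++ intro He. destruct (qexp_eq_dec e (QV xx)); [right|left]; auto.
           ++ intros [He| ->]; [apply He|auto].
        -- intros [_ Hne]; auto.
        -- intros [He _]. assert (S (QN vv)) by (apply H2; auto). apply HT in H3 as [?|?]; [auto|discriminate].
      * intros e [Hb Ha]. unfold qadd in Ha. destruct Ha as [[Ha Hne]| ->].
        -- apply (H1 e); auto.
        -- apply Hv. assert (S (QN vv)) by (apply H2; auto). apply HT in H3 as [?|?]; [auto|discriminate].
      * intro e. unfold qadd. split.
        -- intros [He| ->]; [|right; right; auto].
           assert (S e) by (apply HT; auto). apply H2 in H3 as [?|?]; [auto|].
           right; left; split; auto. intro; subst; auto.
        -- intros [Hb|[[Ha Hne]| ->]]; auto.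
           ++ left. assert (S e) by (apply H2; auto). apply HT in H3 as [?| ->]; auto.
              exfalso; auto.
           ++ left. assert (S e) by (apply H2; auto). apply HT in H3 as [?|?]; [auto|congruence].
  - constructor; eauto.
  - constructor; eauto.
Qed.

Theorem lemmaB1 (qch : chan -> bool) (S : qset) (x : qvar) (v : qname) (P : proc) :
  ~ S (QV x) ->
  typed qch (qadd S (QV x)) P ->
  ~ S (QN v) ->
  typed qch (qadd S (QN v)) (subst v x P).
Proof.
  intros Hx H Hv. eapply main; eauto. intro e; unfold qadd; tauto.
Qed.
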